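(* Let $F$ be a vector lattice endowed with a locally solid additive convergence $\eta$, and let $(f_{\alpha})_{\alpha\in A}$ be a net in $F_{+}$. Then $H=\{h\in F:\ |h|\wedge f_{\alpha}\xrightarrow{\eta} 0_{F}\}$ is an ideal of $F$. If $\eta$ is idempotent, then $H$ is closed (i.e., the limit of every $\eta$-convergent net in $H$ lies in $H$).
   Context: A convergence structure on a vector lattice $F$ is locally solid additive if addition and $f\mapsto -f$ are continuous and whenever $|e_\alpha|\le|f_\alpha|$ for all $\alpha$ and $f_\alpha\to 0_F$, then $e_\alpha\to0_F$. A locally solid additive convergence $\eta$ is idempotent if for any nets $(f_{\alpha})_{\alpha\in A},(g_{\beta})_{\beta\in B}\subset F_{+}$ such that $g_{\beta}\xrightarrow[\beta]{\eta} 0_{F}$ and $(f_{\alpha}-g_{\beta})^{+}\xrightarrow[\alpha]{\eta} 0_{F}$ for every $\beta$, it follows that $f_{\alpha}\xrightarrow[\alpha]{\eta} 0_{F}$. *)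

(* Defs.v *)
From HB Require Import structures.
From mathcomp Require Import all_boot all_order all_algebra.
From mathcomp Require Import reals.
Set Implicit Arguments. Unset Strict Implicit. Unset Printing Implicit Defensive.
Import Order.TTheory GRing.Theory Num.Theory.
Local Open Scope ring_scope.

Record dirset := DirSet {
  dcar :> Type;
  dle : dcar -> dcar -> Prop;
  dle_refl : forall a, dle a a;
  dle_trans : forall a b c, dle a b -> dle b c -> dle a c;
  dle_dir : forall a b, exists c, dle a c /\ dle b c;
  dnonempty : inhabited dcar }.

Definition convergence (X : Type) := forall A : dirset, (A -> X) -> X -> Prop.

Definition quasi_subnet (X : Type) (A B : dirset) (y : B -> X) (x : A -> X) :=
  forall a0 : A, exists b0 : B, forall b, dle b0 b ->
    exists a, dle a0 a /\ y b = x a.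

(* Net convergence structure (O'Brien--Troitsky--van der Walt). *)
Definition is_convergence_structure (X : Type) (eta : convergence X) :=
  [/\ (forall (A : dirset) (x : X), eta A (fun _ => x) x),
      (forall (A B : dirset) (x : A -> X) (y : B -> X) (l : X),
          eta A x l -> quasi_subnet y x -> eta B y l) &
      (forall (A : dirset) (x y z : A -> X) (l : X),
          eta A x l -> eta A y l -> (forall a, z a = x a \/ z a = y a) ->
          eta A z l)].

Record vlattice (R : realType) (F : lmodType R) := VLattice {
  vle : F -> F -> Prop;
  vjoin : F -> F -> F;
  vle_refl : forall x, vle x x;
  vle_anti : forall x y, vle x y -> vle y x -> x = y;
  vle_trans : forall x y z, vle x y -> vle y z -> vle x z;
  vle_add : forall x y z, vle x y -> vle (x + z) (y + z);
  vle_scale : forall (a : R) x y, 0 <= a -> vle x y -> vle (a *: x) (a *: y);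
  vjoin_ubl : forall x y, vle x (vjoin x y);
  vjoin_ubr : forall x y, vle y (vjoin x y);
  vjoin_least : forall x y z, vle x z -> vle y z -> vle (vjoin x y) z }.

Section VL.
Variables (R : realType) (F : lmodType R) (V : vlattice F).
Definition vmeet (x y : F) : F := - vjoin V (- x) (- y).
Definition vabs (x : F) : F := vjoin V x (- x).
Definition vpos (x : F) : F := vjoin V x 0.

Definition is_ideal (S : F -> Prop) :=
  [/\ S 0,
      (forall x y, S x -> S y -> S (x + y)),
      (forall (a : R) x, S x -> S (a *: x)) &
      (forall x y, S y -> vle V (vabs x) (vabs y) -> S x)].

Definition locally_solid_additive (eta : convergence F) :=
  [/\ (forall (A : dirset) (x y : A -> F) (l m : F),
          eta A x l -> eta A y m -> eta A (fun a => x a + y a) (l + m)),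
      (forall (A : dirset) (x : A -> F) (l : F),
          eta A x l -> eta A (fun a => - x a) (- l)) &
      (forall (A : dirset) (e f : A -> F),
          (forall a, vle V (vabs (e a)) (vabs (f a))) ->
          eta A f 0 -> eta A e 0)].

Definition idempotent_conv (eta : convergence F) :=
  forall (A B : dirset) (f : A -> F) (g : B -> F),
    (forall a, vle V 0 (f a)) -> (forall b, vle V 0 (g b)) ->
    eta B g 0 ->
    (forall b, eta A (fun a => vpos (f a - g b)) 0) ->
    eta A f 0.

Definition closed_set (eta : convergence F) (S : F -> Prop) :=
  forall (B : dirset) (h : B -> F) (x : F),
    (forall b, S (h b)) -> eta B h x -> S x.
End VL.

(* Main.v *)
Require Import Defs.
From HB Require Import structures.
From mathcomp Require Import all_boot all_order all_algebra.
From mathcomp Require Import reals.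
Import Order.TTheory GRing.Theory Num.Theory.
Local Open Scope ring_scope.
Set Implicit Arguments. Unset Strict Implicit.

Section Aux.
Variables (R : realType) (F : lmodType R) (V : vlattice F).
Local Notation le := (vle V).

Lemma le_tr x y z : le x y -> le y z -> le x z.
Proof. exact: vle_trans. Qed.

Lemma le_add2 x y u v : le x y -> le u v -> le (x + u) (y + v).
Proof.
move=> h1 h2; apply: (le_tr (vle_add u h1)).
by rewrite ![y + _]addrC; apply: vle_add.
Qed.

Lemma le_subl x y z : le (x - y) z <-> le x (z + y).
Proof.
split=> h.
  by have := vle_add y h; rewrite subrK.
by have := vle_add (- y) h; rewrite addrK.
Qed.

Lemma le_sub0 x y : le 0 (y - x) -> le x y.
Proof. by move=> h; have := vle_add x h; rewrite add0r subrK. Qed.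

Lemma le_opp x y : le x y -> le (- y) (- x).
Proof.
move=> h; have := vle_add (- x - y) h.
by rewrite addrA subrr add0r addrC addrNK.
Qed.

Lemma le_oppl x y : le x (- y) -> le y (- x).
Proof. by move=> /le_opp; rewrite opprK. Qed.

Lemma le_oppr x y : le (- x) y -> le (- y) x.
Proof. by move=> /le_opp; rewrite opprK. Qed.

Lemma meet_l x y : le (vmeet V x y) x.
Proof. by apply: le_oppr; apply: vjoin_ubl. Qed.

Lemma meet_r x y : le (vmeet V x y) y.
Proof. by apply: le_oppr; apply: vjoin_ubr. Qed.

Lemma meet_glb x y z : le z x -> le z y -> le z (vmeet V x y).
Proof.
move=> h1 h2; rewrite /vmeet; apply: le_oppl.
by apply: vjoin_least; apply: le_opp.
Qed.

Lemma meet_mono x y f : le x y -> le (vmeet V x f) (vmeet V y f).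
Proof.
move=> h; apply: meet_glb; last exact: meet_r.
exact: le_tr (meet_l _ _) h.
Qed.

Lemma le_addnn u x y : le 0 u -> le x y -> le x (u + y).
Proof. by move=> hu h; have := le_add2 hu h; rewrite add0r. Qed.

Lemma meet_add u v f : le 0 u -> le 0 v -> le 0 f ->
  le (vmeet V (u + v) f) (vmeet V u f + vmeet V v f).
Proof.
move=> hu hv hf; set z := vmeet V (u + v) f.
apply/le_subl; apply: meet_glb.
- apply/le_subl; rewrite addrC; apply/le_subl; apply: meet_glb.
  + by apply/le_subl; rewrite addrC; apply: meet_l.
  + by apply/le_subl; rewrite addrC; apply: le_addnn => //; apply: meet_r.
- apply/le_subl; rewrite addrC; apply/le_subl; apply: meet_glb.
  + by apply/le_subl; apply: le_addnn => //; apply: meet_r.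
  + by apply/le_subl; apply: le_addnn => //; apply: meet_r.
Qed.

Lemma meet_ge0 x y : le 0 x -> le 0 y -> le 0 (vmeet V x y).
Proof. exact: meet_glb. Qed.

Lemma abs_ubl x : le x (vabs V x). Proof. exact: vjoin_ubl. Qed.
Lemma abs_ubr x : le (- x) (vabs V x). Proof. exact: vjoin_ubr. Qed.

Lemma abs_ge0 x : le 0 (vabs V x).
Proof.
have h := le_add2 (abs_ubl x) (abs_ubr x); rewrite subrr in h.
have h0 : (0:R) <= 2%:R^-1 by rewrite invr_ge0 ler0n.
move: (vle_scale h0 h).
rewrite scaler0 -mulr2n -scaler_nat scalerA mulVf ?scale1r //.
by rewrite pnatr_eq0.
Qed.

Lemma abs_id z : le 0 z -> vabs V z = z.
Proof.
move=> hz; apply: vle_anti; last exact: abs_ubl.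
apply: vjoin_least; first exact: vle_refl.
have h2 := le_opp hz; rewrite oppr0 in h2; exact: le_tr h2 hz.
Qed.

Lemma abs_opp z : le (vabs V (- z)) (vabs V z).
Proof. by apply: vjoin_least; [apply: abs_ubr | rewrite opprK; apply: abs_ubl]. Qed.

Lemma abs_tri x y : le (vabs V (x + y)) (vabs V x + vabs V y).
Proof.
apply: vjoin_least; first by apply: le_add2; apply: abs_ubl.
by rewrite opprD; apply: le_add2; apply: abs_ubr.
Qed.

Lemma abs_scale (a : R) x : le (vabs V (a *: x)) (`|a| *: vabs V x).
Proof.
have [ha|ha] := leP 0 a.
  rewrite ger0_norm //; apply: vjoin_least; first exact: vle_scale ha (abs_ubl x).
  by rewrite -scalerN; apply: vle_scale ha (abs_ubr x).
rewrite ltr0_norm //; have ha' : 0 <= - a by rewrite oppr_ge0 ltW.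
apply: vjoin_least.
  by rewrite -[a *: x]opprK -scaleNr -scalerN; apply: vle_scale ha' (abs_ubr x).
by rewrite -scaleNr; apply: vle_scale ha' (abs_ubl x).
Qed.

Lemma pos_le y m : le y m -> le 0 m -> le (vpos V y) m.
Proof. by move=> h1 h2; apply: vjoin_least. Qed.

Lemma pos_ge0 y : le 0 (vpos V y).
Proof. exact: vjoin_ubr. Qed.

End Aux.

Theorem proposition2p4 (R : realType) (F : lmodType R) (V : vlattice F)
  (eta : convergence F)
  (Heta : is_convergence_structure eta)
  (Hls : locally_solid_additive V eta)
  (A : dirset) (f : A -> F) (Hf : forall a, vle V 0 (f a)) :
  let H := fun h : F => eta A (fun a => vmeet V (vabs V h) (f a)) 0 in
  is_ideal V H /\ (idempotent_conv V eta -> closed_set eta H).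
Proof.
move=> H; case: Hls => Hadd Hneg Hsol; case: Heta => Hcst _ _.
have Hsolid x y : H y -> vle V (vabs V x) (vabs V y) -> H x.
  move=> Hy Hxy; apply: (Hsol _ _ _ _ Hy) => a.
  have g1 := meet_ge0 (abs_ge0 V x) (Hf a).
  have g2 := meet_ge0 (abs_ge0 V y) (Hf a).
  rewrite (abs_id g1) (abs_id g2).
  exact: meet_mono.
have abs0 : vabs V 0 = 0 by rewrite abs_id //; apply: vle_refl.
have H0 : H 0.
  apply: (Hsol _ _ (fun _ => 0)); last exact: Hcst.
  move=> a; have -> : vmeet V (vabs V 0) (f a) = 0.
    apply: vle_anti; first by apply: vle_trans; [apply: meet_l | rewrite abs0; apply: vle_refl].
    by apply: meet_ge0 => //; rewrite abs0; apply: vle_refl.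
  exact: vle_refl.
have Hplus x y : H x -> H y -> H (x + y).
  move=> Hx Hy; have := Hadd _ _ _ _ _ Hx Hy; rewrite addr0 => Hs.
  apply: (Hsol _ _ _ _ Hs) => a.
  have g1 := meet_ge0 (abs_ge0 V x) (Hf a).
  have g2 := meet_ge0 (abs_ge0 V y) (Hf a).
  have g3 := meet_ge0 (abs_ge0 V (x + y)) (Hf a).
  have g4 : vle V 0 (vmeet V (vabs V x) (f a) + vmeet V (vabs V y) (f a)).
    by have := le_add2 g1 g2; rewrite addr0.
  rewrite (abs_id g3) (abs_id g4).
  apply: vle_trans (meet_add (abs_ge0 V x) (abs_ge0 V y) (Hf a)).
  exact: meet_mono (abs_tri _ _ _).
have Habs x : H x -> H (vabs V x).
  move=> Hx; apply: (Hsolid _ x Hx); rewrite (abs_id (abs_ge0 V x)); exact: vle_refl.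
have Hnat x n : H x -> H (x *+ n).
  by move=> Hx; elim: n => [|n IH]; rewrite ?mulr0n // mulrS; apply: Hplus.
split; first split.
- exact: H0.
- exact: Hplus.
- move=> a x Hx; pose n := Num.bound `|a|.
  apply: (Hsolid _ (vabs V x *+ n)); first by apply: Hnat; apply: Habs.
  have hn : 0 <= n%:R - `|a| by rewrite subr_ge0 ltW // archi_boundP.
  have hp : vle V 0 (vabs V x *+ n).
    by rewrite -scaler_nat -(scaler0 _ n%:R); apply: vle_scale (abs_ge0 _ _).
  rewrite (abs_id hp); apply: vle_trans (abs_scale _ _ _) _.
  apply: le_sub0; rewrite -scaler_nat -scalerBl -(scaler0 _ (n%:R - `|a|)).
  exact: vle_scale (abs_ge0 _ _).
- exact: Hsolid.
move=> Hid B h x Hh Hconv.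
have Hg : eta B (fun b => h b - x) 0.
  by have := Hadd _ _ _ _ _ Hconv (Hcst B (- x)); rewrite subrr.
apply: (Hid A B _ (fun b => vabs V (h b - x))).
- by move=> a; apply: meet_ge0; [apply: abs_ge0 | apply: Hf].
- by move=> b; apply: abs_ge0.
- apply: (Hsol _ _ _ _ Hg) => b; rewrite (abs_id (abs_ge0 V (h b - x))); exact: vle_refl.
move=> b; apply: (Hsol _ _ _ _ (Hh b)) => a.
have gm : vle V 0 (vmeet V (vabs V (h b)) (f a)).
  by apply: meet_ge0; [apply: abs_ge0 | apply: Hf].
rewrite (abs_id gm) (abs_id (pos_ge0 V _)).
apply: pos_le; last exact: gm.
apply/le_subl.
have e : x = h b + - (h b - x) by rewrite opprB subrKC.
have h1 : vle V (vabs V x) (vabs V (h b) + vabs V (h b - x)).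
  rewrite [in vabs V x]e.
  apply: vle_trans (abs_tri V (h b) (- (h b - x))) _.
  by apply: le_add2; [apply: vle_refl | apply: abs_opp].
apply: vle_trans (@meet_mono _ _ V _ _ (f a) h1) _.
apply: vle_trans (meet_add (abs_ge0 V (h b)) (abs_ge0 V (h b - x)) (Hf a)) _.
apply: le_add2; first exact: vle_refl.
exact: (@meet_l _ _ V (vabs V (h b - x)) (f a)).
Qed.
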